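(* Let $S\subseteq\mathbb{N}^k$. If $S$ is denoted by some resimple expression, then $S$ is a recognizable subset of $\mathbb{N}^k$.
   Context: $\mathbb{N}$ includes $0$; $\mathbf{e}_j$ is the $j$-th unit vector of $\mathbb{N}^k$. For finite $B\subseteq\mathbb{N}^k$, $B^\oplus$ is the set of $\mathbb{N}$-linear combinations of elements of $B$, and $\gamma+B^\oplus=\{\gamma+\sigma:\sigma\in B^\oplus\}$. $B$ is a free basis if every element of $B^\oplus$ has a unique representation as an $\mathbb{N}$-linear combination of elements of $B$. An element is primary if it equals $n\mathbf{e}_j$ with $n>0$. An atomic resimple expression is $\gamma+B^\oplus$ with $\gamma\in\mathbb{N}^k$ and $B$ a free basis all of whose elements are primary. Resimple expressions are built inductively: atomic resimple expressions are resimple, and if $E,F$ are resimple then so are $E\cup F$, $E\cap F$ and $E^c$ (complement in $\mathbb{N}^k$), with the obvious set semantics. With $A=\{a_1,\dots,a_k\}$ and $\varphi:A^*\to\mathbb{N}^k$, $\varphi(w)=(|w|_{a_1},\dots,|w|_{a_k})$ ($|w|_a$ = number of occurrences of $a$ in $w$), a set $S\subseteq\mathbb{N}^k$ is recognizable if $\varphi^{-1}(S)$ is a regular language. *)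

(* Defs.v *)
From mathcomp Require Import all_boot.
Set Implicit Arguments. Unset Strict Implicit. Unset Printing Implicit Defensive.

Definition vec (k : nat) := {ffun 'I_k -> nat}.

Definition unitv k (j : 'I_k) : vec k := [ffun i => if i == j then 1 else 0].

Definition scalev k (n : nat) (v : vec k) : vec k := [ffun i => n * v i].

(* A finite subset B of N^k is represented by a duplicate-free list.
   N-linear combination of the elements of B with coefficients c. *)
Definition lincomb k (B : seq (vec k)) (c : vec k -> nat) : vec k :=
  [ffun i => \sum_(b <- B) c b * b i].

Definition span k (B : seq (vec k)) (x : vec k) : Prop :=
  exists c : vec k -> nat, x = lincomb B c.

Definition lin_set k (g : vec k) (B : seq (vec k)) (x : vec k) : Prop :=
  exists2 s, span B s & x = [ffun i => g i + s i].

Definition free_basis k (B : seq (vec k)) : Prop :=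
  uniq B /\
  forall c c' : vec k -> nat, lincomb B c = lincomb B c' ->
    forall b, b \in B -> c b = c' b.

Definition primary k (v : vec k) : Prop :=
  exists (n : nat) (j : 'I_k), 0 < n /\ v = scalev n (unitv j).

Inductive rexp (k : nat) : Type :=
| RAtom of vec k & seq (vec k)
| RUnion of rexp k & rexp k
| RInter of rexp k & rexp k
| RCompl of rexp k.

Fixpoint denote k (e : rexp k) : vec k -> Prop :=
  match e with
  | RAtom g B => lin_set g B
  | RUnion e1 e2 => fun x => denote e1 x \/ denote e2 x
  | RInter e1 e2 => fun x => denote e1 x /\ denote e2 x
  | RCompl e1 => fun x => ~ denote e1 x
  end.

Fixpoint resimple k (e : rexp k) : Prop :=
  match e with
  | RAtom g B => free_basis B /\ (forall b, b \in B -> primary b)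
  | RUnion e1 e2 => resimple e1 /\ resimple e2
  | RInter e1 e2 => resimple e1 /\ resimple e2
  | RCompl e1 => resimple e1
  end.

(* Alphabet A = {a_1,...,a_k} is 'I_k; phi = Parikh map *)
Definition parikh k (w : seq 'I_k) : vec k := [ffun i => count_mem i w].

Definition regular k (L : seq 'I_k -> Prop) : Prop :=
  exists (Q : finType) (q0 : Q) (delta : Q -> 'I_k -> Q) (F : pred Q),
    forall w, F (foldl delta q0 w) <-> L w.

Definition recognizable k (S : vec k -> Prop) : Prop :=
  regular (fun w : seq 'I_k => S (parikh w)).

(* Main.v *)
Require Import Defs.
From mathcomp Require Import all_boot zify.
From Stdlib Require Import ClassicalEpsilon.
Set Implicit Arguments. Unset Strict Implicit.

Definition invar k T p (S : vec k -> Prop) :=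
  forall x y : vec k, (forall j, minn (x j) T = minn (y j) T /\ x j %% p = y j %% p) ->
  S x -> S y.

Section Reg.
Variables (k T p : nat) (S : vec k -> Prop).
Hypothesis p0 : 0 < p.
Hypothesis HS : invar T p S.

Definition stQ := {ffun 'I_k -> 'I_T.+1 * 'I_p.+1}.
Definition st (w : seq 'I_k) : stQ :=
  [ffun j => (inord (minn (count_mem j w) T), inord (count_mem j w %% p))].
Definition dl (q : stQ) (a : 'I_k) : stQ :=
  [ffun j => if j == a then (inord (minn (q j).1.+1 T), inord ((q j).2.+1 %% p)) else q j].

Lemma dl_st u a : dl (st u) a = st (rcons u a).
Proof.
apply/ffunP => j; rewrite !ffunE -cats1 count_cat /=.
case: (eqVneq j a) => [->|ne] /=; last by rewrite !addn0.
rewrite addn1 /= !inordK; [|lia|lia].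
by congr (_, _); congr inord; [lia| rewrite -addn1 modnDml addn1].
Qed.

Lemma foldl_st u w : foldl dl (st u) w = st (u ++ w).
Proof.
elim: w u => [|a w IH] u /=; first by rewrite cats0.
by rewrite dl_st IH cat_rcons.
Qed.

Lemma st_eq w w' : st w = st w' -> forall j,
  minn (parikh w j) T = minn (parikh w' j) T /\ parikh w j %% p = parikh w' j %% p.
Proof.
move=> E j; move/ffunP: E => /(_ j); rewrite !ffunE => -[E1 E2].
have := congr1 (@nat_of_ord _) E1; have := congr1 (@nat_of_ord _) E2.
rewrite !inordK; [|lia|lia|lia|lia].
by move=> -> ->.
Qed.

Lemma invar_regular : recognizable S.
Proof.
pose F (q : stQ) : bool :=
  if excluded_middle_informative (exists w, st w = q /\ S (parikh w)) then true else false.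
exists stQ, (st [::]), dl, F => w.
rewrite foldl_st /= /F.
case: excluded_middle_informative => [[w' [E Hw']]|N]; split => //.
- move=> _; apply: HS Hw' => j; exact: st_eq E j.
- by move=> H; exfalso; apply: N; exists w.
Qed.
End Reg.

Section Atom.
Variables (k : nat) (g : vec k) (B : seq (vec k)).
Hypothesis FB : free_basis B.
Hypothesis PB : forall b, b \in B -> primary b.

Lemma prim_coord (b : vec k) : primary b ->
  exists n j, 0 < n /\ forall i, b i = if i == j then n else 0.
Proof.
move=> [n [j [n0 ->]]]; exists n, j; split => // i.
by rewrite /scalev /unitv !ffunE; case: (i == j); rewrite ?muln1 ?muln0.
Qed.

Lemma sum_pred1 (b0 : vec k) (F : vec k -> nat) : b0 \in B ->
  \sum_(b <- B) (if b == b0 then F b else 0) = F b0.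
Proof.
move=> inB; rewrite (bigD1_seq b0) //= ?eqxx; last by case: FB.
rewrite big1_seq ?addn0 // => b /andP [/negbTE -> _] //.
Qed.

Lemma sum_pred1' (b0 : vec k) n t : b0 \in B ->
  \sum_(b <- B) (if b == b0 then n else 0) * b t = n * b0 t.
Proof.
move=> inB; rewrite -(sum_pred1 (fun b => n * b t) inB).
by apply: eq_bigr => b _; case: (b == b0).
Qed.

Lemma uniq_coord b1 b2 i : b1 \in B -> b2 \in B -> b1 i != 0 -> b2 i != 0 -> b1 = b2.
Proof.
move=> i1 i2 nz1 nz2.
have [n1 [j1 [p1 e1]]] := prim_coord (PB i1).
have [n2 [j2 [p2 e2]]] := prim_coord (PB i2).
have ej1 : i = j1 by move: nz1; rewrite e1; case: (i =P j1) => // _; rewrite eqxx.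
have ej2 : i = j2 by move: nz2; rewrite e2; case: (i =P j2) => // _; rewrite eqxx.
subst j1 j2.
case: FB => _ H.
have E : lincomb B (fun b => if b == b1 then n2 else 0) = lincomb B (fun b => if b == b2 then n1 else 0); last first.
  have := H _ _ E b1 i1; rewrite eqxx; case: (b1 =P b2) => // _ e.
  by rewrite e in p2.
apply/ffunP => t; rewrite !ffunE (sum_pred1' n2 t i1) (sum_pred1' n1 t i2).
rewrite e1 e2; case: (t == i); lia.
Qed.

Definition N i := \sum_(b <- B) b i.

Lemma atom_char x : lin_set g B x <-> forall i, exists m, x i = g i + m * N i.
Proof.
split.
- move=> [s [c ->] ->] i; rewrite !ffunE.
  case: (boolP (has (fun b : vec k => b i != 0) B)) => [/hasP [b0 inB nz0]|].
  + exists (c b0); rewrite /N.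
    rewrite (eq_big_seq (fun b => if b == b0 then c b0 * b0 i else 0)); last first.
      move=> b inb; case: eqP => [->//|ne]; case: (eqVneq (b i) 0) => [->|nz]; first by rewrite muln0.
      by case: ne; apply: uniq_coord nz nz0.
    rewrite (sum_pred1 (fun _ => c b0 * b0 i) inB).
    rewrite (eq_big_seq (fun b => if b == b0 then b0 i else 0)); last first.
      move=> b inb; case: eqP => [->//|ne]; case: (eqVneq (b i) 0) => [->|nz] //.
      by case: ne; apply: uniq_coord nz nz0.
    by rewrite (sum_pred1 (fun _ => b0 i) inB).
  + move/hasPn => H; exists 0; rewrite mul0n addn0 big1_seq ?addn0 //.
    by move=> b /andP [_ /H]; rewrite negbK => /eqP ->; rewrite muln0.
- move=> H; have [m Hm] := fin_all_exists H.
  pose c (b : vec k) := \sum_j (if b j != 0 then m j else 0).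
  exists (lincomb B c); first by exists c.
  apply/ffunP => i; rewrite !ffunE Hm; congr (_ + _).
  rewrite /N big_distrr /=; apply: eq_big_seq => b inb.
  case: (eqVneq (b i) 0) => [->|nz]; first by rewrite !muln0.
  congr (_ * _); rewrite /c (bigD1 i) //= nz big1 ?addn0 //.
  have [n [j [_ e]]] := prim_coord (PB inb).
  move=> t ne; move: nz; rewrite !e; case: (i =P j) => // <- _.
  by rewrite (negbTE ne).
Qed.
End Atom.

Lemma nat_step (g N T p x y m : nat) : g < T -> 0 < p -> (0 < N -> N %| p) ->
  minn x T = minn y T -> x %% p = y %% p -> x = g + m * N -> exists m', y = g + m' * N.
Proof.
move=> gT p0 Np Emin Emod ex.
case: (ltnP x T) => xT.
  by exists m; have -> : y = x by clear -Emin xT; lia.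
have yT : T <= y by clear -Emin xT; lia.
case: (posnP N) => [N0|Npos].
  by exfalso; rewrite N0 muln0 addn0 in ex; clear -ex gT xT; lia.
have dN := Np Npos.
have e1 : x = y %[mod N] by rewrite -(modn_dvdm x dN) -(modn_dvdm y dN) Emod.
have e2 : x = g %[mod N] by rewrite ex addnC modnMDl.
have : N %| y - g.
  rewrite -eqn_mod_dvd; first by rewrite -e1 e2.
  by clear -gT yT; lia.
move=> /divnK e; exists ((y - g) %/ N); rewrite e; clear -gT yT; lia.
Qed.

Lemma invar_weak k T p T' p' (S : vec k -> Prop) : invar T p S -> T <= T' -> p %| p' ->
  invar T' p' S.
Proof.
move=> H TT pp x y E; apply: H => j; have [E1 E2] := E j; split; first by clear -E1 TT; lia.
by rewrite -(modn_dvdm (x j) pp) -(modn_dvdm (y j) pp) E2.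
Qed.

Lemma atom_invar k (g : vec k) B : free_basis B -> (forall b, b \in B -> primary b) ->
  exists T p, 0 < p /\ invar T p (lin_set g B).
Proof.
move=> FB PB; exists (\sum_i g i).+1, (\prod_i maxn (N B i) 1); split.
  by rewrite prodn_gt0 // => i; rewrite leq_max leqnn orbT.
move=> x y E /(atom_char g FB PB) Hx; apply/(atom_char g FB PB) => i.
have [m Hm] := Hx i; have [E1 E2] := E i.
apply: nat_step E1 E2 Hm.
- by rewrite ltnS (bigD1 i) //= leq_addr.
- by rewrite prodn_gt0 // => j; rewrite leq_max leqnn orbT.
- move=> Np; rewrite (bigD1 i) //=; apply: dvdn_mulr.
  by move/maxn_idPl: Np => ->.
Qed.

Lemma expr_invar k (e : rexp k) : resimple e -> exists T p, 0 < p /\ invar T p (denote e).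
Proof.
elim: e => [g B|e1 IH1 e2 IH2|e1 IH1 e2 IH2|e1 IH1] /=.
- by move=> [FB PB]; apply: atom_invar.
- move=> [/IH1 [T1 [p1 [p10 H1]]] /IH2 [T2 [p2 [p20 H2]]]].
  exists (maxn T1 T2), (p1 * p2); split; first by rewrite muln_gt0 p10.
  have H1' := invar_weak H1 (leq_maxl T1 T2) (dvdn_mulr p2 (dvdnn p1)).
  have H2' := invar_weak H2 (leq_maxr T1 T2) (dvdn_mull p1 (dvdnn p2)).
  by move=> x y E [h|h]; [left; apply: H1' E h|right; apply: H2' E h].
- move=> [/IH1 [T1 [p1 [p10 H1]]] /IH2 [T2 [p2 [p20 H2]]]].
  exists (maxn T1 T2), (p1 * p2); split; first by rewrite muln_gt0 p10.
  have H1' := invar_weak H1 (leq_maxl T1 T2) (dvdn_mulr p2 (dvdnn p1)).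
  have H2' := invar_weak H2 (leq_maxr T1 T2) (dvdn_mull p1 (dvdnn p2)).
  by move=> x y E [h h']; split; [apply: H1' E h|apply: H2' E h'].
- move=> /IH1 [T [p [p0 H]]]; exists T, p; split => // x y E nx hy; apply: nx.
  by apply: H hy => j; have [E1 E2] := E j.
Qed.

Theorem mainTheorem6 (k : nat) (S : vec k -> Prop) :
  (exists e : rexp k, resimple e /\ (forall x, denote e x <-> S x)) ->
  recognizable S.
Proof.
move=> [e [re He]]; have [T [p [p0 H]]] := expr_invar re.
apply: (invar_regular (T:=T) p0) => x y E /He Sx; apply/He; exact: H E Sx.
Qed.
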